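(* Let $\lambda$ be a composition of $n\ge2$. Then $d(U_\lambda,\tilde U_\lambda)\le\frac1n$, where $d$ is the metric of $\mathcal{U}^{(2)}$.
   Context: A composition $\lambda=(\lambda_1,\dots,\lambda_r)$ of $n$ has descent set $D_\lambda=\{\lambda_1,\lambda_1+\lambda_2,\dots,\lambda_1+\dots+\lambda_{r-1}\}$. $\mathcal{U}^{(2)}$ is the set of pairs $(U_\uparrow,U_\downarrow)$ of disjoint open subsets of $]0,1[$ with metric $d((U_\uparrow,U_\downarrow),(V_\uparrow,V_\downarrow))=\max(d_{Haus}(U_\uparrow^c,V_\uparrow^c),d_{Haus}(U_\downarrow^c,V_\downarrow^c))$, complements in $[0,1]$. With $I_s=[\frac{s-1}{n-1},\frac{s}{n-1}]$, $U_\lambda=(\mathrm{int}\bigcup_{s\notin D_\lambda}I_s,\ \mathrm{int}\bigcup_{s\in D_\lambda}I_s)$ ($1\le s\le n-1$). A cell $i\in[1,n]$ is a peak if $i\in D_\lambda\cup\{n\}$ and $i-1\notin D_\lambda$, and a valley if $i\notin D_\lambda$ and $i-1\in D_\lambda\cup\{0\}$; let $1=a_1<\dots<a_{t+1}=n$ be the peaks and valleys. The run paintbox is $\tilde U_\lambda=(\bigcup_{a_i\text{ valley}}]\frac{a_i-1}{n},\frac{a_{i+1}-1}{n}[,\ \bigcup_{a_i\text{ peak}}]\frac{a_i-1}{n},\frac{a_{i+1}-1}{n}[)$, with $a_{i+1}=n+1$ when $a_i=n$. *)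

(* Defs.v *)
From HB Require Import structures.
From mathcomp Require Import all_boot all_order all_algebra.
From mathcomp Require Import all_classical all_reals all_analysis.
Set Implicit Arguments. Unset Strict Implicit. Unset Printing Implicit Defensive.
Import Order.TTheory GRing.Theory Num.Theory.
Import numFieldNormedType.Exports.
Local Open Scope classical_set_scope.
Local Open Scope ring_scope.

Definition is_composition (n : nat) (lam : seq nat) : Prop :=
  all (fun x => (0 < x)%N) lam /\ sumn lam = n.

Definition descents (lam : seq nat) : seq nat :=
  [seq sumn (take k lam) | k <- iota 1 (size lam).-1].

Section Paintbox.
Variable R : realType.

Definition set_dist (x : R) (B : set R) : R := inf [set `|x - b| | b in B].
Definition hausdorff (A B : set R) : R :=
  Num.max (sup [set set_dist a B | a in A]) (sup [set set_dist b A | b in B]).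

Definition compl01 (U : set R) : set R := [set x | 0 <= x <= 1] `\` U.

Definition dU2 (U V : set R * set R) : R :=
  Num.max (hausdorff (compl01 U.1) (compl01 V.1))
          (hausdorff (compl01 U.2) (compl01 V.2)).

Definition Iseg (n s : nat) : set R :=
  [set x | (s.-1)%:R / (n.-1)%:R <= x <= s%:R / (n.-1)%:R].

Definition U_lam (n : nat) (lam : seq nat) : set R * set R :=
  (@interior R (\bigcup_(s in [set s : nat | (1 <= s <= n.-1)%N /\ s \notin descents lam])
              Iseg n s),
   @interior R (\bigcup_(s in [set s : nat | (1 <= s <= n.-1)%N /\ s \in descents lam])
              Iseg n s)).

Definition is_peak (n : nat) (lam : seq nat) (i : nat) : bool :=
  ((i \in descents lam) || (i == n)) && (i.-1 \notin descents lam).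
Definition is_valley (n : nat) (lam : seq nat) (i : nat) : bool :=
  (i \notin descents lam) && ((i.-1 \in descents lam) || (i.-1 == 0%N)).

Definition peaks_valleys (n : nat) (lam : seq nat) : seq nat :=
  [seq i <- iota 1 n | is_peak n lam i || is_valley n lam i].

(* a_{i+1} for a_i (with n+1 after the last one, a_{t+1} = n) *)
Definition next_pv (n : nat) (lam : seq nat) (a : nat) : nat :=
  nth n.+1 (peaks_valleys n lam) (index a (peaks_valleys n lam)).+1.

Definition run_interval (n : nat) (lam : seq nat) (a : nat) : set R :=
  [set x | (a.-1)%:R / n%:R < x < ((next_pv n lam a).-1)%:R / n%:R].

Definition run_paintbox (n : nat) (lam : seq nat) : set R * set R :=
  (\bigcup_(a in [set a | a \in peaks_valleys n lam /\ is_valley n lam a])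
      run_interval n lam a,
   \bigcup_(a in [set a | a \in peaks_valleys n lam /\ is_peak n lam a])
      run_interval n lam a).

End Paintbox.

(* Main.v *)
Require Import Defs.
From HB Require Import structures.
From mathcomp Require Import all_boot all_order all_algebra.
From mathcomp Require Import all_classical all_reals all_analysis.
From mathcomp Require Import lra zify ring.
Import Order.TTheory GRing.Theory Num.Theory.
Import numFieldNormedType.Exports.
Local Open Scope classical_set_scope.
Local Open Scope ring_scope.

Section H.
Variable R : realType.

Lemma set_dist_le (a : R) (B : set R) b d : B b -> `|a - b| <= d -> set_dist a B <= d.
Proof.
move=> Bb h; rewrite /set_dist; apply: le_trans h.
apply: ge_inf; last by exists b.
by exists 0 => _ [y _ <-].
Qed.

Lemma sup_le_d (X : set R) d : 0 <= d -> (forall x, X x -> x <= d) -> sup X <= d.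
Proof.
move=> d0 h; have [->|nX] := eqVneq X set0; first by rewrite sup0.
by apply: ge_sup => //; apply/set0P.
Qed.

Lemma haus_le (A B : set R) (d : R) : 0 <= d ->
  (forall a, A a -> exists2 b, B b & `|a - b| <= d) ->
  (forall b, B b -> exists2 a, A a & `|b - a| <= d) -> hausdorff A B <= d.
Proof.
move=> d0 hA hB; rewrite /hausdorff ge_max; apply/andP; split;
  apply: sup_le_d => // _ [x Ax <-].
  by have [b Bb h] := hA x Ax; exact: set_dist_le Bb h.
by have [b Bb h] := hB x Ax; exact: set_dist_le Bb h.
Qed.
End H.
Section U.
Variable R : realType.
Variable n : nat.
Hypothesis n2 : (2 <= n)%N.
Variable P : nat -> bool.
Let mr : R := (n.-1)%:R.
Lemma mr_gt0 : 0 < mr.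
Proof. by rewrite /mr ltr0n; lia. Qed.

Lemma IsegE s z : Iseg n s z <-> ((s.-1)%:R <= z * mr <= s%:R).
Proof.
by rewrite /Iseg /= -/mr ler_pdivrMr ?ler_pdivlMr ?mr_gt0.
Qed.

Let S : set R := \bigcup_(s in [set s : nat | (1 <= s <= n.-1)%N /\ P s]) Iseg n s.

Lemma not_int (x : R) : (forall e, 0 < e -> exists z, `|x - z| < e /\ ~ S z) ->
  ~ interior S x.
Proof.
move=> h /nbhs_ballP [e e0 be].
have [z [hz nz]] := h e e0.
by apply: nz; apply: be.
Qed.

Lemma in_int (x a b : R) : a < x < b -> (forall z, a < z < b -> S z) -> interior S x.
Proof.
move=> /andP [ax xb] h; apply/nbhs_ballP.
exists (Num.min (x - a) (b - x)); first by rewrite /= lt_min; apply/andP; split; lra.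
move=> z; rewrite /ball /= lt_min => /andP [h1 h2]; apply: h.
move: h1 h2; rewrite !ltr_norml; lra.
Qed.

Lemma S_ge0 z : S z -> 0 <= z <= 1.
Proof.
move=> [s [/andP [s1 sm] _]] /IsegE /andP [h1 h2].
have m0 := mr_gt0.
have h0 : 0 <= z * mr by apply: le_trans h1.
have : z * mr <= mr by apply: le_trans h2 _; rewrite /mr ler_nat.
move=> h5; apply/andP; split; nra.
Qed.

Lemma not_int0 : ~ interior S 0.
Proof.
apply: not_int => e e0; exists (- (e / 2)); split.
  by rewrite sub0r opprK ger0_norm; lra.
by move/S_ge0; lra.
Qed.

Lemma not_int1 : ~ interior S 1.
Proof.
apply: not_int => e e0; exists (1 + e / 2); split.
  rewrite opprD addrA subrr sub0r normrN ger0_norm; lra.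
by move/S_ge0; lra.
Qed.

Lemma open_notS s z : (1 <= s <= n.-1)%N -> ~~ P s ->
  (s.-1)%:R < z * mr < s%:R -> ~ S z.
Proof.
move=> /andP [s1 sm] nP /andP [h1 h2] [s' [/andP [s'1 s'm] Ps']] /IsegE /andP [h3 h4].
have [lt|gt|eq] := ltngtP s' s.
- have : (s'%:R : R) <= (s.-1)%:R by rewrite ler_nat; lia.
  lra.
- have : (s%:R : R) <= (s'.-1)%:R by rewrite ler_nat; lia.
  lra.
- by subst s'; rewrite Ps' in nP.
Qed.

Lemma mr_ge1 : 1 <= mr.
Proof. by rewrite /mr ler1n; lia. Qed.

Lemma seg_not_int s x : (1 <= s <= n.-1)%N -> ~~ P s -> Iseg n s x -> ~ interior S x.
Proof.
move=> hs nP /IsegE /andP [h1 h2].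
have m0 := mr_gt0; have m1 := mr_ge1.
have hlt : ((s.-1)%:R : R) + 1 = s%:R by rewrite natr1; congr (_%:R); lia.
apply: not_int => e e0.
pose t := Num.min (1/2) e.
have t0 : 0 < t by rewrite lt_min; apply/andP; split=> //; lra.
have t1 : t <= 1/2 by rewrite ge_min lexx.
have te : t <= e by rewrite ge_min lexx orbT.
pose w := x * mr.
pose mid : R := (s.-1)%:R + 1/2.
pose d := (mid - w) / mr.
have dm : d * mr = mid - w by rewrite /d -mulrA mulVf ?mulr1 //; lra.
have hd : -1/2 <= d <= 1/2.
  have e1 : -1/2 <= mid - w <= 1/2 by rewrite /mid /w; apply/andP; split; lra.
  apply/andP; split; nra.
exists (x + t * d); split.
  have : - (t / 2) <= t * d <= t / 2 by apply/andP; split; nra.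
  rewrite ltr_norml; move=> hh; apply/andP; split; lra.
move=> HS; apply: (open_notS _ _ hs nP _ HS).
have -> : (x + t * d) * mr = w + t * (mid - w) by rewrite -dm /w; ring.
rewrite /w /mid; apply/andP; split; nra.
Qed.
Lemma divmr_lt c z : (c / mr < z) = (c < z * mr).
Proof. by rewrite ltr_pdivrMr ?mr_gt0. Qed.
Lemma lt_divmr c z : (z < c / mr) = (z * mr < c).
Proof. by rewrite ltr_pdivlMr ?mr_gt0. Qed.

Lemma int_dec x : 0 <= x <= 1 -> ~ interior S x ->
  x = 0 \/ x = 1 \/ exists s, [/\ (1 <= s <= n.-1)%N, ~~ P s & Iseg n s x].
Proof.
move=> /andP [hx0 hx1] ni.
have [->|x0] := eqVneq x 0; first by left.
have [->|x1] := eqVneq x 1; first by right; left.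
right; right; apply: contrapT => nex; apply: ni.
have m0 := mr_gt0.
pose w := x * mr.
have w0 : 0 < w by rewrite /w mulr_gt0 // lt0r x0.
have wm : w < mr.
  rewrite /w -{2}(mul1r mr) ltr_pM2r //; rewrite lt_neqAle x1; exact: hx1.
pose k := Num.truncn w.
have /andP [kw wk] := truncn_itv (ltW w0).
rewrite -/k in kw wk.
have kn : (k < n.-1)%N by rewrite /k truncn_lt_nat ?(ltW w0).
clearbody k.
have PS s : (1 <= s <= n.-1)%N -> Iseg n s x -> P s.
  move=> hs hI; apply/negPn/negP => nP; apply: nex; by exists s; split.
have kS : ((k.+1).-1)%:R <= w <= k.+1%:R by rewrite /= kw ltW.
have Pk1 : P k.+1 by apply: PS; [by apply/andP; split | apply/IsegE].
have [kw'|kw'] := ltP (k%:R) w.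
  apply: (@in_int _ (k%:R / mr) (k.+1%:R / mr)).
    by rewrite divmr_lt lt_divmr -/w kw'.
  move=> z /andP [h1 h2]; exists k.+1; first by split => //; apply/andP; split.
  apply/IsegE; rewrite divmr_lt in h1; rewrite lt_divmr in h2.
  by rewrite /= !ltW.
have wk' : w = k%:R by apply/eqP; rewrite eq_le kw'.
have k1 : (1 <= k)%N.
  rewrite lt0n; apply/negP => /eqP k0; move: wk'; rewrite k0 => wk0; lra.
have Pk : P k.
  apply: PS; first by rewrite k1 ltnW.
  apply/IsegE; rewrite -/w wk'; apply/andP; split; [rewrite ler_nat; apply: leq_pred | exact: lexx].
apply: (@in_int _ ((k.-1)%:R / mr) (k.+1%:R / mr)).
  by rewrite divmr_lt lt_divmr -/w wk' !ltr_nat ltnSn andbT ltn_predL k1.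
move=> z /andP [h1 h2]; rewrite divmr_lt in h1; rewrite lt_divmr in h2.
have [zk|zk] := leP (z * mr) (k%:R).
  exists k; first by split => //; rewrite k1 ltnW.
  by apply/IsegE; rewrite zk ltW.
exists k.+1; first by split => //; apply/andP; split.
by apply/IsegE; rewrite /= ltW // ltW.
Qed.
End U.
Section T.
Variable n : nat.
Variable lam : seq nat.
Hypothesis n2 : (2 <= n)%N.
Hypothesis hc : is_composition n lam.
Let D := descents lam.
Let pv := peaks_valleys n lam.
Definition col (j : nat) : bool := if (j < n)%N then j \in D else n.-1 \notin D.

Lemma nD : n \notin D.
Proof.
case: hc => hpos hsum; apply/negP => /mapP [k]; rewrite mem_iota => /andP [k1 k2] hk.
have ks : (k < size lam)%N by lia.
move: hsum; rewrite -(cat_take_drop k lam) sumn_cat -hk.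
case E: (drop k lam) => [|x s].
  by have := size_drop k lam; rewrite E /=; lia.
have : x \in lam by rewrite -(cat_take_drop k lam) mem_cat E mem_head orbT.
move/(allP hpos) => /= x0 /=; lia.
Qed.

Lemma mem_pv a : (a \in pv) = [&& (1 <= a <= n)%N & is_peak n lam a || is_valley n lam a].
Proof. by rewrite /pv /peaks_valleys mem_filter mem_iota andbC; congr (_ && _); lia. Qed.

Lemma pv_col a : a \in pv -> is_peak n lam a = col a /\ is_valley n lam a = ~~ col a.
Proof.
rewrite mem_pv => /andP [/andP [a1 an]].
have := nD; rewrite -/D.
rewrite /is_peak /is_valley /col -/D.
case: (ltnP a n) => [lt|ge].
  have -> : (a == n) = false by apply/eqP; lia.
  by case: (a \in D); case: (a.-1 \in D); rewrite ?orbF ?orbT //=; case: (a.-1 == 0%N).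
have an' : a = n by lia.
subst a; rewrite eqxx => -> /=.
have -> : (n.-1 == 0%N) = false by apply/eqP; lia.
by rewrite orbT /=; case: (n.-1 \in D).
Qed.

Lemma change j : (2 <= j <= n)%N -> (j \in pv) = (col j != col j.-1).
Proof.
move=> /andP [j2 jn].
have := nD; rewrite -/D => hnD.
rewrite mem_pv /is_peak /is_valley /col -/D.
have -> : (1 <= j <= n)%N by lia.
have -> : (j.-1 < n)%N by lia.
have -> : (j.-1 == 0%N) = false by apply/eqP; lia.
case: (ltnP j n) => [lt|ge].
  have -> : (j == n) = false by apply/eqP; lia.
  by case: (j \in D); case: (j.-1 \in D).
have an' : j = n by lia.
subst j; rewrite eqxx (negbTE hnD) /=.
by case: (n.-1 \in D).
Qed.

Lemma pv_sorted : sorted ltn pv.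
Proof. exact/sorted_filter/iota_ltn_sorted/ltn_trans. Qed.

Lemma pv_le a : a \in pv -> (1 <= a <= n)%N.
Proof. by rewrite mem_pv => /andP []. Qed.

Lemma next_prop a : a \in pv ->
  [/\ (a < next_pv n lam a)%N, (next_pv n lam a \in pv) || (next_pv n lam a == n.+1)
    & forall j, (a < j < next_pv n lam a)%N -> j \notin pv].
Proof.
move=> apv; rewrite /next_pv -/pv.
have ss := pv_sorted.
have lt_nth i j : (i < j < size pv)%N -> (nth n.+1 pv i < nth n.+1 pv j)%N.
  move=> /andP [ij js]; apply: (sorted_ltn_nth ltn_trans) => //; rewrite inE; lia.
set i := index a pv.
have isz : (i < size pv)%N by rewrite index_mem.
have ai : nth n.+1 pv i = a by rewrite nth_index.
case: (ltnP i.+1 (size pv)) => [hi|hi].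
  have b_in : nth n.+1 pv i.+1 \in pv by rewrite mem_nth.
  split.
  - by rewrite -{1}ai; apply: lt_nth; rewrite ltnSn.
  - by rewrite b_in.
  - move=> j /andP [aj jb]; apply/negP => jin.
    have jq := nth_index n.+1 jin.
    have qs : (index j pv < size pv)%N by rewrite index_mem.
    case: (ltngtP (index j pv) i.+1) => [q1|q2|q3].
    + case: (ltngtP (index j pv) i) => [r1|r2|r3]; [|lia|].
      * have := lt_nth (index j pv) i; rewrite jq ai; lia.
      * by move: aj; rewrite -jq r3 ai ltnn.
    + have := lt_nth i.+1 (index j pv); rewrite jq; lia.
    + by move: jb; rewrite -jq q3 ltnn.
rewrite nth_default //; split.
- by have := pv_le _ apv; lia.
- by rewrite eqxx orbT.
- move=> j /andP [aj jb]; apply/negP => jin.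
  have jq := nth_index n.+1 jin.
  have qs : (index j pv < size pv)%N by rewrite index_mem.
  case: (ltngtP (index j pv) i) => [r1|r2|r3]; [|lia|].
  + have := lt_nth (index j pv) i; rewrite jq ai; lia.
  + by move: aj; rewrite -jq r3 ai ltnn.
Qed.

Lemma D0 : 0%N \notin D.
Proof.
case: hc => hpos hsum; apply/negP => /mapP [k]; rewrite mem_iota => /andP [k1 k2] hk.
have ks : (0 < size lam)%N by lia.
case E: lam hk hpos ks => [|x s] //= hk /andP [x0 _] _.
case: k k1 {k2} hk => [|k] // _ /=; lia.
Qed.

Lemma pv1 : 1%N \in pv.
Proof.
rewrite mem_pv /is_peak /is_valley /= (negbTE D0) /= -/D.
rewrite andbT eqxx andbT; apply/andP; split; first lia. by case: (boolP (1%N \in D)) => h; rewrite ?h ?orbT.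
Qed.

Lemma next_le a : a \in pv -> (next_pv n lam a <= n.+1)%N.
Proof.
move=> apv; have [_ /orP [/(pv_le _)/andP [_ h]|/eqP ->] _] := next_prop _ apv; lia.
Qed.

Lemma col_const a j : a \in pv -> (a <= j < next_pv n lam a)%N -> col j = col a.
Proof.
move=> apv; have [anx _ nfree] := next_prop _ apv.
have nle := next_le _ apv; have a1 := pv_le _ apv.
elim: j => [|j IH] /andP [aj jn]; first by lia.
case: (ltnP a j.+1) => [lt|ge]; last by have -> : j.+1 = a by lia.
have cj : col j = col a by apply: IH; lia.
have nin : j.+1 \notin pv by apply: nfree; lia.
have := change j.+1; rewrite (negbTE nin) /= => h.
have : (col j.+1 != col j) = false by rewrite -h //; lia.
by move/negbT; rewrite negbK => /eqP ->.
Qed.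

Lemma last_pv j : (1 <= j <= n)%N -> exists a, [/\ a \in pv, (a <= j)%N & (j < next_pv n lam a)%N].
Proof.
elim: j => [|j IH] // /andP [j1 jn].
case jin: (j.+1 \in pv).
  by exists j.+1; split => //; have [] := next_prop _ jin.
case: (posnP j) => [j0|jp].
  by move: jin; rewrite j0 pv1.
have [a [apv aj jn']] := IH (ltac:(lia)).
exists a; split => //; first lia.
have [_ hb _] := next_prop _ apv.
rewrite ltn_neqAle jn' andbT; apply/eqP => e.
by move: hb; rewrite -e jin /=; apply/negP; lia.
Qed.
End T.

Section TR.
Variable R : realType.
Variable n : nat.
Variable lam : seq nat.
Hypothesis n2 : (2 <= n)%N.
Hypothesis hc : is_composition n lam.
Variable c : bool.
Variable Q : nat -> bool.
Hypothesis hQ : forall a, a \in peaks_valleys n lam -> Q a = (col n lam a == c).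
Let nr : R := n%:R.
Let T : set R := \bigcup_(a in [set a | a \in peaks_valleys n lam /\ Q a]) @run_interval R n lam a.

Lemma nr_gt0 : 0 < nr.
Proof. by rewrite /nr ltr0n; lia. Qed.

Lemma runE a y : @run_interval R n lam a y <->
  ((a.-1)%:R < y * nr < (next_pv n lam a).-1%:R).
Proof. by rewrite /run_interval /= -/nr ltr_pdivrMr ?ltr_pdivlMr ?nr_gt0. Qed.

Lemma T01 y : T y -> 0 < y < 1.
Proof.
move=> [a [apv _]] /runE /andP [h1 h2].
have n0 := nr_gt0.
have h0 : 0 <= ((a.-1)%:R : R) by [].
have := next_le n lam n2 a apv => nle.
have h3 : ((next_pv n lam a).-1%:R : R) <= nr by rewrite /nr ler_nat; lia.
apply/andP; split; nra.
Qed.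

Lemma cell_notT j y : (1 <= j <= n)%N -> col n lam j != c ->
  (j.-1)%:R <= y * nr <= j%:R -> ~ T y.
Proof.
move=> /andP [j1 jn] cj /andP [h1 h2] [a [apv Qa]] /runE /andP [h3 h4].
have a1 := pv_le n lam a apv.
have e1 : ((a.-1)%:R : R) < j%:R by lra.
have e2 : ((j.-1)%:R : R) < (next_pv n lam a).-1%:R by lra.
rewrite ltr_nat in e1; rewrite ltr_nat in e2.
have := col_const n lam n2 hc a j apv (ltac:(apply/andP; split; lia)).
rewrite hQ // in Qa; move/eqP: Qa => Qa ec.
by rewrite ec Qa eqxx in cj.
Qed.

Lemma notT_dec y : 0 <= y <= 1 -> ~ T y ->
  y = 0 \/ y = 1 \/ exists j, [/\ (1 <= j <= n)%N, col n lam j != c &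
                               (j.-1)%:R <= y * nr <= j%:R].
Proof.
move=> /andP [hy0 hy1] nT.
have [->|y0] := eqVneq y 0; first by left.
have [->|y1] := eqVneq y 1; first by right; left.
right; right; apply: contrapT => nex; apply: nT.
have n0 := nr_gt0.
pose w := y * nr.
have w0 : 0 < w by rewrite /w mulr_gt0 // lt0r y0.
have wm : w < nr.
  rewrite /w -{2}(mul1r nr) ltr_pM2r //; rewrite lt_neqAle y1; exact: hy1.
pose k := Num.truncn w.
have /andP [kw wk] := truncn_itv (ltW w0).
rewrite -/k in kw wk.
have kn : (k < n)%N by rewrite /k truncn_lt_nat ?(ltW w0).
clearbody k.
have CS j : (1 <= j <= n)%N -> (j.-1)%:R <= w <= j%:R -> col n lam j = c.
  move=> hj hI; apply/eqP/negP => nc; apply: nex; exists j; split => //.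
  exact/negP.
have ck1 : col n lam k.+1 = c by apply: CS; [apply/andP; split | rewrite /= kw ltW].
have kk : (1 <= k.+1 <= n)%N by apply/andP; split.
have [a [apv ak kna]] := last_pv n lam n2 hc k.+1 kk.
have a1 := pv_le n lam a apv.
have ca : col n lam a = c.
  by rewrite -(col_const n lam n2 hc a k.+1 apv) ?ck1 // ak kna.
exists a; first by split => //; rewrite hQ // ca eqxx.
apply/runE; rewrite -/w; apply/andP; split; last first.
  apply: lt_le_trans wk _; rewrite ler_nat; move: kna; clear; lia.
case: (ltnP a k.+1) => [lt|ge].
  apply: lt_le_trans kw; rewrite ltr_nat; move: lt a1; clear; lia.
have ea : a = k.+1 by move: ge ak; clear; lia.
rewrite ea /=.
have [//|kw'] := ltP (k%:R) w.
have wk' : w = k%:R by apply/eqP; rewrite eq_le kw'.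
have k1 : (1 <= k)%N.
  rewrite lt0n; apply/negP => /eqP k0; move: wk'; rewrite k0 => wk0; lra.
have ck : col n lam k = c.
  apply: CS; first by rewrite k1 ltnW.
  by rewrite wk' lexx andbT ler_nat leq_pred.
have := change n lam n2 hc k.+1; rewrite -ea apv ea /= ck ck1 eqxx => h.
by have := h (ltac:(apply/andP; split; [by []| exact: kn])).
Qed.
End TR.

Lemma dist_scale (R : realType) (N u v : R) : 0 < N -> -1 <= u * N - v * N <= 1 ->
  `|u - v| <= 1 / N.
Proof.
move=> N0 /andP [h1 h2]; rewrite ler_norml; apply/andP; split.
  by rewrite -mulNr ler_pdivrMr // mulrBl.
by rewrite ler_pdivlMr // mulrBl.
Qed.

Section Main.
Variable R : realType.
Variable n : nat.
Variable lam : seq nat.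
Hypothesis n2 : (2 <= n)%N.
Hypothesis hc : is_composition n lam.
Variable P : nat -> bool.
Variable c : bool.
Variable Q : nat -> bool.
Hypothesis hQ : forall a, a \in peaks_valleys n lam -> Q a = (col n lam a == c).
Hypothesis hPc : forall s, (1 <= s <= n.-1)%N -> ~~ P s = (col n lam s != c).

Let S : set R := \bigcup_(s in [set s : nat | (1 <= s <= n.-1)%N /\ P s]) Iseg n s.
Let T : set R := \bigcup_(a in [set a | a \in peaks_valleys n lam /\ Q a]) @run_interval R n lam a.
Let N : R := n%:R.
Let M : R := (n.-1)%:R.

Lemma NM : N = M + 1.
Proof. by rewrite /N /M natr1 prednK //; lia. Qed.

Lemma M1 : 1 <= M.
Proof. by rewrite /M ler1n; lia. Qed.

Lemma main_gen : hausdorff (compl01 (interior S)) (compl01 T) <= 1 / N.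
Proof.
have N0 : 0 < N by rewrite /N ltr0n; lia.
have hNM := NM; have hM1 := M1.
apply: haus_le; first by rewrite divr_ge0 // ltW.
- move=> x [hx nx].
  have [->|[->|[s [hs nP hI]]]] := int_dec R n n2 P x hx nx.
  + exists 0; last by rewrite subrr normr0 divr_ge0 // ltW.
    by split; [rewrite /= lexx ler01 | move/(T01 R n lam n2 Q); rewrite ltxx].
  + exists 1; last by rewrite subrr normr0 divr_ge0 // ltW.
    by split; [rewrite /= lexx ler01 | move/(T01 R n lam n2 Q); rewrite ltxx andbF].
  + have [s1 sn] : (1 <= s)%N /\ (s <= n.-1)%N by apply/andP.
    have cs : col n lam s != c by rewrite -hPc.
    have hs' : (1 <= s <= n)%N by apply/andP; split => //; lia.
    move: hx => /andP [x0 x1].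
    move: hI => /(IsegE R n n2) /andP [i1 i2]; rewrite -/M in i1 i2.
    have sM : (s%:R : R) <= M by rewrite /M ler_nat.
    have s1R : ((s.-1)%:R : R) + 1 = s%:R by rewrite natr1 prednK.
    have xN : x * N = x * M + x by rewrite hNM; ring.
    case: (lerP (x * N) (s%:R)) => [xs|xs].
    * exists x; last by rewrite subrr normr0 divr_ge0 // ltW.
      split; first by rewrite /= x0 x1.
      apply: (cell_notT R n lam n2 hc c Q hQ s x hs' cs).
      rewrite -/N xs andbT; lra.
    * have yN : (s%:R / N) * N = s%:R by rewrite mulfVK // gt_eqF.
      exists (s%:R / N).
        split.
          apply/andP; split; first by rewrite divr_ge0 // ltW.
          by rewrite ler_pdivrMr // mul1r; lra.
        apply: (cell_notT R n lam n2 hc c Q hQ s _ hs' cs).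
        rewrite -/N yN lexx andbT; lra.
      apply: dist_scale => //; rewrite yN; apply/andP; split; lra.
- move=> y [hy ny].
  have [->|[->|[j [hj cj hI]]]] := notT_dec R n lam n2 hc c Q hQ y hy ny.
  + exists 0; last by rewrite subrr normr0 divr_ge0 // ltW.
    by split; [rewrite /= lexx ler01 | exact: not_int0].
  + exists 1; last by rewrite subrr normr0 divr_ge0 // ltW.
    by split; [rewrite /= lexx ler01 | exact: not_int1].
  + have [j1 jn] : (1 <= j)%N /\ (j <= n)%N by apply/andP.
    move: hy => /andP [y0 y1].
    move: hI; rewrite -/N => /andP [i1 i2].
    have j1R : ((j.-1)%:R : R) + 1 = j%:R by rewrite natr1 prednK.
    have yN : y * N = y * M + y by rewrite hNM; ring.
    case: (ltnP j n) => [jlt|jge].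
    * have hj' : (1 <= j <= n.-1)%N by apply/andP; split => //; lia.
      have nP : ~~ P j by rewrite hPc.
      have jM : ((j.-1)%:R : R) + 1 <= M by rewrite natr1 prednK // /M ler_nat; lia.
      case: (lerP ((j.-1)%:R) (y * M)) => [yj|yj].
      -- exists y; last by rewrite subrr normr0 divr_ge0 // ltW.
         split; first by rewrite /= y0 y1.
         apply: (seg_not_int R n n2 P j y hj' nP).
         apply/(IsegE R n n2); rewrite -/M yj /=; lra.
      -- have M0 : 0 < M by lra.
         have xM : ((j.-1)%:R / M) * M = (j.-1)%:R by rewrite mulfVK // gt_eqF.
         have x0 : 0 <= (j.-1)%:R / M by rewrite divr_ge0 // ltW.
         have x1 : (j.-1)%:R / M <= 1 by rewrite ler_pdivrMr // mul1r; lra.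
         exists ((j.-1)%:R / M).
           split; first by rewrite /= x0 x1.
           apply: (seg_not_int R n n2 P j _ hj' nP).
           apply/(IsegE R n n2); rewrite -/M xM lexx /=; lra.
         apply: dist_scale => //.
         have -> : (j.-1)%:R / M * N = (j.-1)%:R + (j.-1)%:R / M.
           by rewrite hNM mulrDr mulr1 xM.
         apply/andP; split; lra.
    * have ejn : j = n by lia.
      exists 1.
        by split; [rewrite /= lexx ler01 | exact: not_int1].
      apply: dist_scale => //; rewrite mul1r.
      have : ((j.-1)%:R : R) + 1 = N by rewrite j1R ejn.
      move=> hh; apply/andP; split; lra.
Qed.
End Main.

Theorem lemma11 (R : realType) (n : nat) (lam : seq nat) :
  (2 <= n)%N -> is_composition n lam ->
  dU2 (U_lam R n lam) (run_paintbox R n lam) <= 1 / n%:R.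
Proof.
move=> n2 hc; rewrite /dU2 ge_max; apply/andP; split.
- apply: (main_gen R n lam n2 hc (fun s => s \notin descents lam) false (is_valley n lam)).
  + move=> a apv; have [_ ->] := pv_col n lam n2 hc a apv.
    by case: (col n lam a).
  + move=> s /andP [s1 sn]; rewrite /col ifT; last by lia.
    by case: (s \in descents lam).
- apply: (main_gen R n lam n2 hc (fun s => s \in descents lam) true (is_peak n lam)).
  + move=> a apv; have [-> _] := pv_col n lam n2 hc a apv.
    by case: (col n lam a).
  + move=> s /andP [s1 sn]; rewrite /col ifT; last by lia.
    by case: (s \in descents lam).
Qed.
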